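(* Let $E/\mathbb{F}_q$ be a function field of genus $\mathfrak g$, $P_1,\dots,P_N,P_\infty$ distinct rational places, and $\lambda$ an integer with $\mathfrak g\le\lambda<N$. Set $t=1+\lfloor (N-\lambda+\mathfrak g-1)/2\rfloor$. Then there exist $\mathbf r\in\mathbb{F}_q^N$ and two distinct codewords $\mathbf c_1\ne\mathbf c_2$ of $\mathfrak C(\lambda P_\infty,\mathcal P)$ such that both $\mathbf r-\mathbf c_1$ and $\mathbf r-\mathbf c_2$ are $t$-bursts. In particular, no decoder can uniquely correct all burst errors of length $t$; at most $\lfloor (N-\lambda+\mathfrak g-1)/2\rfloor$ burst errors can be corrected deterministically.
   Context: $E/\mathbb{F}_q$ has full constant field $\mathbb{F}_q$. $\mathcal L(\lambda P_\infty)=\{f\in E^*:\nu_{P_\infty}(f)\ge-\lambda,\ \nu_Q(f)\ge0\ \forall Q\ne P_\infty\}\cup\{0\}$, $\mathcal P=\{P_1,\dots,P_N\}$, and $\mathfrak C(\lambda P_\infty,\mathcal P)=\{(f(P_1),\dots,f(P_N)):f\in\mathcal L(\lambda P_\infty)\}\subseteq\mathbb{F}_q^N$. A vector $\mathbf e\in\mathbb{F}_q^N$ is a $b$-burst if $\mathbf e=0$ or the indices $i\le j$ of its first and last nonzero entries satisfy $j-i<b$. *)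

(* Defs.v *)
From HB Require Import structures.
From mathcomp Require Import all_boot all_order all_algebra all_field.
Set Implicit Arguments. Unset Strict Implicit. Unset Printing Implicit Defensive.
Import Order.TTheory GRing.Theory Num.Theory.
Local Open Scope ring_scope.

Section FunctionField.
Variables (F : finFieldType) (E : fieldType) (iota : {rmorphism F -> E}).

(* E/F is an algebraic function field of one variable over F: E is a finite
   extension of the rational function field F(x) for some x transcendental
   over F (here: E is spanned over F(x) by finitely many elements). *)
Definition transcendental (x : E) : Prop :=
  forall p : {poly F}, p != 0 -> (map_poly iota p).[x] != 0.

Definition function_field : Prop :=
  exists x : E, transcendental x /\
  exists (n : nat) (b : 'I_n -> E), forall y : E,
    exists (p : 'I_n -> {poly F}) (q : {poly F}),
      q != 0 /\
      y * (map_poly iota q).[x] = \sum_(i < n) (map_poly iota (p i)).[x] * b i.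

Definition full_constant_field : Prop :=
  forall y : E, (exists p : {poly F}, p != 0 /\ (map_poly iota p).[y] = 0) ->
    exists a : F, y = iota a.

(* A place of E/F, given by its normalized discrete valuation v_P
   (with the convention v_P 0 = 0; the value at 0 is never used otherwise). *)
Definition is_place (v : E -> int) : Prop :=
  [/\ v 0 = 0,
      (forall x y, x != 0 -> y != 0 -> v (x * y) = v x + v y),
      (forall x y, x != 0 -> y != 0 -> x + y != 0 ->
         Num.min (v x) (v y) <= v (x + y)),
      (exists z, z != 0 /\ v z = 1)
    & (forall a, a != 0 -> v (iota a) = 0)].

Definition inO (v : E -> int) (x : E) : Prop := x = 0 \/ 0 <= v x.
Definition inM (v : E -> int) (x : E) : Prop := x = 0 \/ 0 < v x.

(* deg P = [O_P/P : F] = d *)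
Definition place_degree (v : E -> int) (d : nat) : Prop :=
  exists b : 'I_d -> E,
    [/\ (forall i, inO v (b i)),
        (forall a : 'I_d -> F,
            inM v (\sum_(i < d) iota (a i) * b i) -> forall i, a i = 0)
      & (forall x, inO v x ->
            exists a : 'I_d -> F, inM v (x - \sum_(i < d) iota (a i) * b i))].

Definition rational_place (v : E -> int) : Prop := is_place v /\ place_degree v 1.

(* residue class of x in O_P/P = F at a rational place: x(P) = a *)
Definition evals_to (v : E -> int) (x : E) (a : F) : Prop :=
  inO v x /\ inM v (x - iota a).

Definition has_dim (S : E -> Prop) (n : nat) : Prop :=
  exists b : 'I_n -> E,
    [/\ (forall i, S (b i)),
        (forall a : 'I_n -> F, \sum_(i < n) iota (a i) * b i = 0 -> forall i, a i = 0)
      & (forall x, S x -> exists a : 'I_n -> F, x = \sum_(i < n) iota (a i) * b i)].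

(* Riemann-Roch space L(A) of the divisor A = sum_i m_i P_i
   (the P_i pairwise distinct places) *)
Definition LRR (k : nat) (P : 'I_k -> E -> int) (m : 'I_k -> int) (x : E) : Prop :=
  x = 0 \/
  forall w, is_place w ->
    (forall i, w = P i -> - m i <= w x) /\ ((forall i, w <> P i) -> 0 <= w x).

Definition divisor_ok (k : nat) (P : 'I_k -> E -> int) (d : 'I_k -> nat) : Prop :=
  [/\ forall i, is_place (P i), injective P & forall i, place_degree (P i) (d i)].

(* g is the genus: g = max_A (deg A - l(A) + 1) *)
Definition is_genus (g : nat) : Prop :=
  (forall k (P : 'I_k -> E -> int) (m : 'I_k -> int) (d : 'I_k -> nat) (n : nat),
     divisor_ok P d -> has_dim (LRR P m) n ->
     \sum_(i < k) m i * (d i)%:Z + 1 - n%:Z <= g%:Z)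
  /\
  (exists k (P : 'I_k -> E -> int) (m : 'I_k -> int) (d : 'I_k -> nat) (n : nat),
     [/\ divisor_ok P d, has_dim (LRR P m) n &
         \sum_(i < k) m i * (d i)%:Z + 1 - n%:Z = g%:Z]).

Definition L_multiple (Pinf : E -> int) (lam : nat) (f : E) : Prop :=
  f = 0 \/
  ((- (lam%:Z) <= Pinf f) /\ forall w, is_place w -> w <> Pinf -> 0 <= w f).

Definition AG_code (N : nat) (P : 'I_N -> E -> int) (Pinf : E -> int) (lam : nat)
  (c : 'rV[F]_N) : Prop :=
  exists f, L_multiple Pinf lam f /\ forall i, evals_to (P i) f (c ord0 i).

End FunctionField.

Definition is_burst (F : fieldType) (N b : nat) (e : 'rV[F]_N) : Prop :=
  e = 0 \/
  exists i j : 'I_N,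
    [/\ e ord0 i != 0, e ord0 j != 0,
        (forall k : 'I_N, e ord0 k != 0 -> (i <= k <= j)%N)
      & (j - i < b)%N].

(* Main.v *)
Require Import Defs.
From HB Require Import structures.
From mathcomp Require Import all_boot all_order all_algebra all_field zify ring.
From Stdlib Require Import ClassicalEpsilon Classical.
Import Order.TTheory GRing.Theory Num.Theory.
Set Implicit Arguments. Unset Strict Implicit. Unset Printing Implicit Defensive.
Local Open Scope ring_scope.

Definition decb (P : Prop) : bool :=
  if excluded_middle_informative P then true else false.
Lemma decbP (P : Prop) : reflect P (decb P).
Proof. rewrite /decb; case: excluded_middle_informative => h; constructor; done. Qed.

Lemma int_double (x : int) : x + x = 0 -> x = 0. Proof. lia. Qed.
Lemma int_inv (a b : int) : 0 = a + b -> b = - a. Proof. lia. Qed.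
Section Val.
Variables (F : finFieldType) (E : fieldType) (iota : {rmorphism F -> E}).

Definition comb n (b : 'I_n -> E) (a : 'I_n -> F) : E := \sum_i iota (a i) * b i.

Lemma iota_eq0 a : (iota a == 0) = (a == 0).
Proof. exact: fmorph_eq0. Qed.

Variable v : E -> int.
Hypothesis hv : is_place iota v.

Lemma pl0 : v 0 = 0. Proof. by case: hv. Qed.
Lemma plM x y : x != 0 -> y != 0 -> v (x * y) = v x + v y.
Proof. by case: hv => _ h _ _ _; apply: h. Qed.
Lemma plD x y : x != 0 -> y != 0 -> x + y != 0 -> Num.min (v x) (v y) <= v (x + y).
Proof. by case: hv => _ _ h _ _; apply: h. Qed.
Lemma plC a : a != 0 -> v (iota a) = 0.
Proof. by case: hv => _ _ _ _ h; apply: h. Qed.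
Lemma pl1 : v 1 = 0.
Proof.
have := plM (oner_neq0 E) (oner_neq0 E); rewrite mul1r => h.
by apply: (@addrI _ (v 1)); rewrite addr0 -h.
Qed.
Lemma plN1 : v (-1) = 0.
Proof.
have h1 : (-1 : E) != 0 by rewrite oppr_eq0 oner_neq0.
have := plM h1 h1; rewrite mulrNN mul1r pl1 => h.
exact: int_double (esym h).
Qed.
Lemma plN x : v (- x) = v x.
Proof.
have [->|x0] := eqVneq x 0; first by rewrite oppr0.
have h1 : (-1 : E) != 0 by rewrite oppr_eq0 oner_neq0.
by rewrite -mulN1r plM // plN1 add0r.
Qed.
Lemma plV x : x != 0 -> v x^-1 = - v x.
Proof.
move=> x0; have := plM x0 (invr_neq0 x0); rewrite mulfV // pl1 => h.
exact: int_inv h.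
Qed.
Lemma plX x n : x != 0 -> v (x ^+ n) = (n%:Z) * v x.
Proof.
move=> x0; elim: n => [|n IH]; first by rewrite expr0 pl1 mul0r.
rewrite exprS plM ?expf_neq0 // IH; lia.
Qed.
Lemma plXz x (k : int) : x != 0 -> v (x ^ k) = k * v x.
Proof.
move=> x0; case: k => n.
  by rewrite -exprnP plX.
change (x ^ Negz n) with ((x ^+ n.+1)^-1).
rewrite plV ?expf_neq0 // plX // NegzE; lia.
Qed.
Lemma plCM a x : a != 0 -> x != 0 -> v (iota a * x) = v x.
Proof. by move=> a0 x0; rewrite plM ?iota_eq0 // plC // add0r. Qed.

Lemma inM0 : inM v 0. Proof. by left. Qed.
Lemma inO0 : inO v 0. Proof. by left. Qed.
Lemma inM_add x y : inM v x -> inM v y -> inM v (x + y).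
Proof.
move=> [->|hx]; first by rewrite add0r.
move=> [->|hy]; first by rewrite addr0; right.
have [e|e] := eqVneq (x + y) 0; first by left.
right. have x0 : x != 0 by apply/eqP => h; move: hx; rewrite h pl0.
have y0 : y != 0 by apply/eqP => h; move: hy; rewrite h pl0.
apply: (lt_le_trans _ (plD x0 y0 e)); by rewrite lt_min hx hy.
Qed.
Lemma inO_add x y : inO v x -> inO v y -> inO v (x + y).
Proof.
move=> [->|hx]; first by rewrite add0r.
move=> [->|hy]; first by rewrite addr0; right.
have [e|e] := eqVneq (x + y) 0; first by left.
right. have [x0|x0] := eqVneq x 0; first by rewrite x0 add0r.
have [y0|y0] := eqVneq y 0; first by rewrite y0 addr0.
apply: (le_trans _ (plD x0 y0 e)); by rewrite le_min hx hy.
Qed.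
Lemma inM_scale a x : inM v x -> inM v (iota a * x).
Proof.
have [->|a0] := eqVneq a 0; first by rewrite rmorph0 mul0r; left.
move=> [->|hx]; first by rewrite mulr0; left.
have x0 : x != 0 by apply/eqP => h; move: hx; rewrite h pl0.
by right; rewrite plCM.
Qed.
Lemma inO_scale a x : inO v x -> inO v (iota a * x).
Proof.
have [->|a0] := eqVneq a 0; first by rewrite rmorph0 mul0r; left.
move=> [->|hx]; first by rewrite mulr0; left.
have [x0|x0] := eqVneq x 0; first by rewrite x0 mulr0; left.
by right; rewrite plCM.
Qed.
Lemma inM_opp x : inM v x -> inM v (- x).
Proof. by move=> h; rewrite -mulN1r -(rmorphN1 iota); apply: inM_scale. Qed.
Lemma inO_opp x : inO v x -> inO v (- x).
Proof. by move=> h; rewrite -mulN1r -(rmorphN1 iota); apply: inO_scale. Qed.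
Lemma inM_sub x y : inM v x -> inM v y -> inM v (x - y).
Proof. by move=> hx hy; apply: inM_add => //; apply: inM_opp. Qed.
Lemma inM_sum n (f : 'I_n -> E) : (forall i, inM v (f i)) -> inM v (\sum_i f i).
Proof. move=> h; elim/big_ind: _ => //; [exact: inM0|exact: inM_add]. Qed.
Lemma inO_sum n (f : 'I_n -> E) : (forall i, inO v (f i)) -> inO v (\sum_i f i).
Proof. move=> h; elim/big_ind: _ => //; [exact: inO0|exact: inO_add]. Qed.
Lemma inM_inO x : inM v x -> inO v x.
Proof. by case=> [->|h]; [left|right; lia]. Qed.
Lemma inC_notM a : a != 0 -> ~ inM v (iota a).
Proof. move=> a0 [/eqP|]; [by rewrite iota_eq0 (negPf a0)|by rewrite plC //]. Qed.
Lemma inO_C a : inO v (iota a).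
Proof. have [->|a0] := eqVneq a 0; [rewrite rmorph0; left|right; rewrite plC] => //. Qed.

Lemma comb_add n (b : 'I_n -> E) a1 a2 :
  comb b (fun i => a1 i + a2 i) = comb b a1 + comb b a2.
Proof. by rewrite /comb -big_split /=; apply: eq_bigr => i _; rewrite rmorphD mulrDl. Qed.
Lemma comb_scale n (b : 'I_n -> E) c a :
  comb b (fun i => c * a i) = iota c * comb b a.
Proof. by rewrite /comb mulr_sumr; apply: eq_bigr => i _; rewrite rmorphM mulrA. Qed.
Lemma comb_opp n (b : 'I_n -> E) a : comb b (fun i => - a i) = - comb b a.
Proof. by rewrite /comb -sumrN; apply: eq_bigr => i _; rewrite rmorphN mulNr. Qed.
Lemma comb0 n (b : 'I_n -> E) : comb b (fun _ => 0) = 0.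
Proof. by rewrite /comb big1 // => i _; rewrite rmorph0 mul0r. Qed.

End Val.
Section Res.
Variables (F : finFieldType) (E : fieldType) (iota : {rmorphism F -> E}).
Variable v : E -> int.
Hypothesis hv : is_place iota v.
Variables (d : nat) (b : 'I_d -> E).
Hypothesis hbO : forall i, inO v (b i).
Hypothesis hbI : forall a : 'I_d -> F,
            inM v (\sum_(i < d) iota (a i) * b i) -> forall i, a i = 0.
Hypothesis hbS : forall x, inO v x ->
            exists a : 'I_d -> F, inM v (x - \sum_(i < d) iota (a i) * b i).

Definition res (x : E) : 'I_d -> F :=
  match excluded_middle_informative (exists a, inM v (x - comb iota b a)) with
  | left h => proj1_sig (constructive_indefinite_description _ h)
  | right _ => fun _ => 0 end.

Lemma res_spec x : inO v x -> inM v (x - comb iota b (res x)).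
Proof.
move=> hx; rewrite /res; case: excluded_middle_informative => h.
  by case: constructive_indefinite_description.
by exfalso; apply: h; apply: hbS.
Qed.

Lemma res_uniq x a a' : inM v (x - comb iota b a) -> inM v (x - comb iota b a') ->
  forall i, a i = a' i.
Proof.
move=> h h' i; apply/eqP; rewrite -subr_eq0; apply/eqP.
apply: (hbI (a := fun i => a i - a' i)).
have -> : \sum_(i < d) iota (a i - a' i) * b i = comb iota b a - comb iota b a'.
  by rewrite -comb_opp -comb_add.
have -> : comb iota b a - comb iota b a' = (x - comb iota b a') - (x - comb iota b a).
  by ring.
exact: (inM_sub hv).
Qed.

Lemma res_add x y : inO v x -> inO v y -> forall i, res (x + y) i = res x i + res y i.
Proof.
move=> hx hy; apply: (res_uniq (res_spec (inO_add hv hx hy))).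
rewrite comb_add.
have -> : x + y - (comb iota b (res x) + comb iota b (res y)) =
   (x - comb iota b (res x)) + (y - comb iota b (res y)).
  by rewrite opprD addrACA.
by apply: (inM_add hv) => //; apply: res_spec.
Qed.

Lemma res_scale c x : inO v x -> forall i, res (iota c * x) i = c * res x i.
Proof.
move=> hx; apply: (res_uniq (res_spec (inO_scale hv c hx))).
rewrite comb_scale -mulrBr; apply: (inM_scale hv) => //; exact: res_spec.
Qed.

Lemma res_M x : inM v x -> forall i, res x i = 0.
Proof.
move=> hx; apply: (res_uniq (a' := fun _ => 0) (res_spec (inM_inO hx))).
by rewrite comb0 subr0.
Qed.

Lemma res_0M x : inO v x -> (forall i, res x i = 0) -> inM v x.
Proof.
move=> hx h; have := res_spec hx.
suff -> : comb iota b (res x) = 0 by rewrite subr0.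
by rewrite /comb big1 // => i _; rewrite h rmorph0 mul0r.
Qed.

End Res.

Section Deg.
Variables (F : finFieldType) (E : fieldType) (iota : {rmorphism F -> E}).
Variable v : E -> int.
Hypothesis hv : is_place iota v.

Lemma one_notM : ~ inM v 1.
Proof. rewrite -(rmorph1 iota); apply: inC_notM => //; exact: oner_neq0. Qed.
Lemma inO1 : inO v 1.
Proof. rewrite -(rmorph1 iota); exact: inO_C. Qed.

Lemma place_degree_uniq d : place_degree iota v 1 -> place_degree iota v d -> d = 1%N.
Proof.
move=> [b1 [hO1 hI1 hS1]] [b [hO hI hS]].
case: d b hO hI hS => [|[|d]] b hO hI hS //.
  exfalso; apply: one_notM; have [a ha] := hS 1 inO1.
  by move: ha; rewrite big_ord0 subr0.
exfalso.
pose al i := res iota v b1 (b i) ord0.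
have hal : forall i, inM v (b i - iota (al i) * b1 ord0).
  move=> i; have := res_spec hS1 (hO i).
  by rewrite /comb big_ord1.
have key : forall a : 'I_d.+2 -> F, \sum_i a i * al i = 0 ->
    inM v (\sum_i iota (a i) * b i).
  move=> a ha.
  have -> : \sum_i iota (a i) * b i =
     \sum_i iota (a i) * (b i - iota (al i) * b1 ord0) + iota (\sum_i a i * al i) * b1 ord0.
    rewrite rmorph_sum mulr_suml -big_split /=; apply: eq_bigr => i _.
    by rewrite rmorphM mulrBr -mulrA subrK.
  rewrite ha rmorph0 mul0r addr0; apply: (inM_sum hv) => // i; apply: (inM_scale hv) => //.
pose i0 : 'I_d.+2 := ord0. pose i1 : 'I_d.+2 := lift ord0 ord0.
have ne01 : i0 != i1 by [].
have ne10 : i1 != i0 by [].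
have [z0|nz0] := eqVneq (al i0) 0.
  pose a i := if i == i0 then 1 else 0 : F.
  have /hI h : inM v (\sum_i iota (a i) * b i).
    apply: key; rewrite (bigD1 i0) //= big1 ?addr0 /a ?eqxx ?z0 ?mulr0 // => i /negPf ->.
    by rewrite mul0r.
  by have := h i0; rewrite /a eqxx => /eqP; rewrite oner_eq0.
pose a i := if i == i0 then al i1 else if i == i1 then - al i0 else 0.
have /hI h : inM v (\sum_i iota (a i) * b i).
  apply: key; rewrite (bigD1 i0) // (bigD1 i1) //= big1 ?addr0.
    by rewrite /a eqxx (negPf ne10) eqxx; ring.
  by move=> i /andP [/negPf h1 /negPf h2]; rewrite /a h1 h2 mul0r.
by have := h i1; rewrite /a (negPf ne10) eqxx => /eqP; rewrite oppr_eq0 (negPf nz0).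
Qed.

Lemma eval_exists x : rational_place iota v -> inO v x -> exists a, evals_to iota v x a.
Proof.
move=> [_ [b1 [hO1 hI1 hS1]]] hx.
have [e he] := hS1 1 inO1; have [a ha] := hS1 x hx.
move: he ha; rewrite !big_ord1; move: (e ord0) (a ord0) => {}e {}a he ha.
have e0 : e != 0.
  apply/eqP => e0; apply: one_notM; by move: he; rewrite e0 rmorph0 mul0r subr0.
have hb : inM v (b1 ord0 - iota e^-1).
  have -> : b1 ord0 - iota e^-1 = iota (- e^-1) * (1 - iota e * b1 ord0).
    rewrite rmorphN fmorphV; field; by rewrite iota_eq0.
  exact: (inM_scale hv).
exists (a * e^-1); split => //.
have -> : x - iota (a * e^-1) = (x - iota a * b1 ord0) + iota a * (b1 ord0 - iota e^-1).
  by rewrite mulrBr rmorphM addrA subrK.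
by apply: (inM_add hv) => //; apply: (inM_scale hv).
Qed.

Lemma evals_M x a : evals_to iota v x a -> inM v x -> a = 0.
Proof.
move=> [_ h] hx; have [//|a0] := eqVneq a 0; exfalso.
apply: (inC_notM hv a0).
have -> : iota a = x - (x - iota a) by rewrite opprB addrC subrK.
exact: (inM_sub hv).
Qed.

End Deg.
Section Lin.
Variables (F : finFieldType) (E : fieldType) (iota : {rmorphism F -> E}).
Local Notation comb := (comb iota).

Definition subsp (S : E -> Prop) :=
  [/\ S 0, (forall x y, S x -> S y -> S (x + y)) & (forall a x, S x -> S (iota a * x))].
Definition spans (S : E -> Prop) n := exists b : 'I_n -> E,
  (forall i, S (b i)) /\ forall x, S x -> exists a, x = comb b a.
Definition indep (S : E -> Prop) n := exists b : 'I_n -> E,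
  (forall i, S (b i)) /\ forall a, comb b a = 0 -> forall i, a i = 0.

Lemma dim_spans S n : has_dim iota S n -> spans S n.
Proof. by move=> [b [h1 _ h3]]; exists b. Qed.
Lemma dim_indep S n : has_dim iota S n -> indep S n.
Proof. by move=> [b [h1 h2 _]]; exists b. Qed.
Lemma spans_ext S S' n : (forall x, S x <-> S' x) -> spans S n -> spans S' n.
Proof. move=> e [b [h1 h2]]; exists b; split=> [i|x /e]; [apply/e|]; auto. Qed.
Lemma indep_ext S S' n : (forall x, S x <-> S' x) -> indep S n -> indep S' n.
Proof. move=> e [b [h1 h2]]; exists b; split=> [i|]; [apply/e|]; auto. Qed.
Lemma dim_ext S S' n : (forall x, S x <-> S' x) -> has_dim iota S n -> has_dim iota S' n.
Proof. move=> e [b [h1 h2 h3]]; exists b; split=> [i|//|x /e]; [apply/e|]; auto. Qed.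
Lemma indep_sub S S' n : (forall x, S x -> S' x) -> indep S n -> indep S' n.
Proof. move=> e [b [h1 h2]]; exists b; split=> [i|]; auto. Qed.

Definition ext m (b : 'I_m -> E) (w : E) (i : 'I_m.+1) : E :=
  if insub (val i) is Some j then b j else w.
Definition extF m (a : 'I_m -> F) (c : F) (i : 'I_m.+1) : F :=
  if insub (val i) is Some j then a j else c.

Lemma comb_ext m (b : 'I_m -> E) w a c :
  comb (ext b w) (extF a c) = comb b a + iota c * w.
Proof.
rewrite /comb big_ord_recr /=; congr (_ + _).
  apply: eq_bigr => i _; rewrite /ext /extF /=.
  case: insubP => [j _ hj|]; last by rewrite /= ltn_ord.
  by have -> : j = i by apply: val_inj.
by rewrite /ext /extF /= insubF ?ltnn.
Qed.

Lemma spanup (V W : E -> Prop) (phi : nat -> E -> F) d n :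
  subsp W -> (forall x, V x -> W x) ->
  (forall x, V x -> forall i, (i < d)%N -> phi i x = 0) ->
  (forall i, (i < d)%N -> forall x y, W x -> W y -> phi i (x + y) = phi i x + phi i y) ->
  (forall i, (i < d)%N -> forall a x, W x -> phi i (iota a * x) = a * phi i x) ->
  (forall x, W x -> (forall i, (i < d)%N -> phi i x = 0) -> V x) ->
  spans V n -> spans W (d + n).
Proof.
elim: d W => [|d IH] W [W0 WD WZ] VW Vk hD hZ kV hV.
  case: hV => b [hb1 hb2]; exists b; split; first by move=> i; apply: VW.
  by move=> x /kV h; apply: hb2; apply: h.
pose W' x := W x /\ phi d x = 0.
have p0 : phi d 0 = 0.
  have := hD d (ltnSn d) 0 0 W0 W0; rewrite addr0 => h.
  by apply: (@addrI _ (phi d 0)); rewrite addr0 -h.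
have sW' : subsp W'.
  split; first by split.
    by move=> x y [hx px] [hy py]; split; [apply: WD|rewrite hD // px py addr0].
  by move=> a x [hx px]; split; [apply: WZ|rewrite hZ // px mulr0].
have [b [hb1 hb2]] : spans W' (d + n).
  apply: IH => //.
  - by move=> x hx; split; [apply: VW|apply: Vk].
  - by move=> x hx i hi; apply: Vk => //; apply: ltnW.
  - by move=> i hi x y [hx _] [hy _]; apply: hD => //; apply: ltnW.
  - by move=> i hi a x [hx _]; apply: hZ => //; apply: ltnW.
  - move=> x [hx px] h; apply: kV => // i; rewrite ltnS leq_eqVlt => /orP [/eqP -> //|].
    exact: h.
have [w [hw hwp]] : exists w, W w /\ forall x, W x -> exists c, W' (x + iota c * w).
  case: (classic (exists w, W w /\ phi d w != 0)) => [[w [hw pw]]|nw].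
    exists w; split => // x hx; exists (- (phi d x / phi d w)); split.
      by apply: WD => //; apply: WZ.
    rewrite hD // ?hZ //; last by apply: WZ.
    by rewrite mulNr divfK // subrr.
  exists 0; split => // x hx; exists 0; rewrite mulr0 addr0; split => //.
  apply: NNPP => h; apply: nw; exists x; split => //; exact/eqP.
exists (ext b w); split.
  by move=> i; rewrite /ext; case: insub => [j|] //; case: (hb1 j).
move=> x hx; have [c hc] := hwp x hx; have [a ha] := hb2 _ hc.
exists (extF a (- c)); rewrite comb_ext -ha rmorphN mulNr addrK //.
Qed.

Lemma extract S n : subsp S -> spans S n -> exists2 n', (n' <= n)%N & has_dim iota S n'.
Proof.
move=> sS; elim: n => [|n IH] [b [hb1 hb2]].
  by exists 0%N => //; exists b; split => // a _ [].
case: (classic (forall a, comb b a = 0 -> forall i, a i = 0)) => hi.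
  by exists n.+1 => //; exists b.
have [a [ha [i ai]]] : exists a, comb b a = 0 /\ exists i, a i != 0.
  apply: NNPP => h; apply: hi => a ha i; apply/eqP; apply: NNPP => ai.
  by apply: h; exists a; split => //; exists i; apply/negP.
have [n' hn' hd] : exists2 n', (n' <= n)%N & has_dim iota S n'.
  apply: IH; exists (fun j => b (lift i j)); split => // x hx.
  have [c hc] := hb2 x hx.
  exists (fun j => c (lift i j) - c i / a i * a (lift i j)).
  move: ha; rewrite hc /comb (bigD1_ord i) //= (bigD1_ord i) //= => ha.
  have e : iota (a i) * b i = - \sum_(j < n) iota (a (lift i j)) * b (lift i j).
    by apply/eqP; rewrite -addr_eq0 ha.
  have -> : iota (c i) * b i = iota (c i / a i) * (iota (a i) * b i).
    by rewrite mulrA -rmorphM divfK.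
  rewrite e mulrN -mulNr.
  rewrite mulr_sumr -big_split /=; apply: eq_bigr => j _.
  rewrite rmorphB rmorphM; ring.
by exists n' => //; apply: leqW.
Qed.

Lemma key_ineq S m n : indep S m -> spans S n -> (m <= n)%N.
Proof.
move=> [u [hu1 hu2]] [b [hb1 hb2]]; rewrite leqNgt; apply/negP => lt.
have hA : forall i, exists a, u i = comb b a by move=> i; apply: hb2.
pose A (i : 'I_m) := proj1_sig (constructive_indefinite_description _ (hA i)).
have hAi : forall i, u i = comb b (A i).
  by move=> i; rewrite /A; case: constructive_indefinite_description.
pose Am : 'M[F]_(m, n) := \matrix_(i, j) A i j.
have rk : (\rank (kermx Am) != 0)%N.
  rewrite mxrank_ker; have := rank_leq_col Am; lia.
have [r hr] : exists r, row r (kermx Am) != 0.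
  apply: NNPP => h; move: rk; rewrite mxrank_eq0 => /eqP; apply.
  apply/row_matrixP => r; rewrite row0; apply/eqP; apply: NNPP => h'.
  by apply: h; exists r; apply/negP.
pose c := row r (kermx Am).
have cA : c *m Am = 0 by rewrite -row_mul mulmx_ker row0.
have [j hj] : exists j, c 0 j != 0.
  apply: NNPP => h; move: hr; rewrite -/c => /eqP; apply; apply/rowP => j.
  rewrite [RHS]mxE; apply/eqP; apply: NNPP => h'; by apply: h; exists j; apply/negP.
move/eqP: hj; apply; apply: (hu2 (fun i => c 0 i) _ j).
rewrite /comb (eq_bigr (fun i => iota (c 0 i) * comb b (A i))); last by move=> i _; rewrite hAi.
rewrite /comb; under eq_bigr do rewrite mulr_sumr.
rewrite exchange_big /= big1 // => k _.
have e : (c *m Am) 0 k = 0 by rewrite cA mxE.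
move: e; rewrite mxE => e.
rewrite (eq_bigr (fun i => iota (c 0 i * Am i k) * b k)); last first.
  by move=> i _; rewrite /Am [X in _ = iota (_ * X) * _]mxE rmorphM mulrA.
by rewrite -mulr_suml -rmorph_sum e rmorph0 mul0r.
Qed.

End Lin.
Section Div.
Variables (F : finFieldType) (E : fieldType) (iota : {rmorphism F -> E}).
Local Notation comb := (comb iota).
Local Notation place := (is_place iota).

Definition ind (p w : E -> int) : int := if decb (w = p) then 1 else 0.
Lemma ind_id p : ind p p = 1. Proof. by rewrite /ind; case: decbP. Qed.
Lemma ind_ne p w : w <> p -> ind p w = 0. Proof. by rewrite /ind; case: decbP. Qed.

Definition Lg (D : (E -> int) -> int) (x : E) : Prop :=
  x = 0 \/ forall w, place w -> - D w <= w x.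

Lemma Lg0 D : Lg D 0. Proof. by left. Qed.

Lemma Lg_sub D : subsp iota (Lg D).
Proof.
split; first exact: Lg0.
  move=> x y [->|hx]; first by rewrite add0r.
  move=> [->|hy]; first by rewrite addr0; right.
  have [e|e] := eqVneq (x + y) 0; first by left.
  have [x0|x0] := eqVneq x 0; first by rewrite x0 add0r; right.
  have [y0|y0] := eqVneq y 0; first by rewrite y0 addr0; right.
  right => w hw; apply: (le_trans _ (plD hw x0 y0 e)).
  by rewrite le_min hx ?hy.
move=> a x [->|hx]; first by rewrite mulr0; left.
have [->|a0] := eqVneq a 0; first by rewrite rmorph0 mul0r; left.
have [x0|x0] := eqVneq x 0; first by rewrite x0 mulr0; left.
by right => w hw; rewrite (plCM hw a0 x0); apply: hx.
Qed.

Lemma Lg_mono D D' x : (forall w, place w -> D w <= D' w) -> Lg D x -> Lg D' x.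
Proof.
move=> h [->|hx]; first by left.
right => w hw; have := h w hw; have := hx w hw; lia.
Qed.
Lemma Lg_ext D D' x : (forall w, place w -> D w = D' w) -> Lg D x <-> Lg D' x.
Proof.
move=> h; split; apply: Lg_mono => w hw; rewrite h //.
Qed.

Lemma Lg_mul D1 D2 f x : Lg D1 f -> Lg D2 x -> Lg (fun w => D1 w + D2 w) (f * x).
Proof.
move=> [->|hf]; first by rewrite mul0r; left.
move=> [->|hx]; first by rewrite mulr0; left.
have [f0|f0] := eqVneq f 0; first by rewrite f0 mul0r; left.
have [x0|x0] := eqVneq x 0; first by rewrite x0 mulr0; left.
right => w hw; rewrite (plM hw f0 x0); have := hf w hw; have := hx w hw; lia.
Qed.

Lemma step D (P : E -> int) d n : place P -> place_degree iota P d ->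
  spans iota (Lg D) n -> spans iota (Lg (fun w => D w + ind P w)) (d + n).
Proof.
move=> hP [b [hbO hbI hbS]] hV.
have [z [z0 z1]] : exists z, z != 0 /\ P z = 1 by case: hP.
pose k : int := D P + 1.
pose phi i x := if @insub _ _ 'I_d i is Some j then res iota P b (z ^ k * x) j else 0.
have phiE : forall i (h : (i < d)%N) x, phi i x = res iota P b (z ^ k * x) (Ordinal h).
  move=> i h x; rewrite /phi; case: insubP => [j _ hj|]; last by rewrite h.
  by congr res; apply: val_inj.
have vzk : forall x, x != 0 -> P (z ^ k * x) = k + P x.
  move=> x x0; rewrite (plM hP (expfz_neq0 k z0) x0) (plXz hP k z0) z1 mulr1 //.
have WO : forall x, Lg (fun w => D w + ind P w) x -> inO P (z ^ k * x).
  move=> x [->|hx]; first by rewrite mulr0; left.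
  have [->|x0] := eqVneq x 0; first by rewrite mulr0; left.
  right; rewrite vzk //; have := hx P hP; rewrite ind_id /k; lia.
apply: (spanup (phi := phi)) hV.
- exact: Lg_sub.
- by move=> x; apply: Lg_mono => w _; rewrite /ind; case: decbP; lia.
- move=> x hx i hi; rewrite (phiE i hi); apply: res_M => //.
  case: hx => [->|hx]; first by rewrite mulr0; left.
  have [->|x0] := eqVneq x 0; first by rewrite mulr0; left.
  right; rewrite vzk //; have := hx P hP; rewrite /k; lia.
- move=> i hi x y hx hy; rewrite !(phiE i hi) mulrDr; apply: res_add => //; exact: WO.
- move=> i hi a x hx; rewrite !(phiE i hi) mulrCA; apply: res_scale => //; exact: WO.
- move=> x hx h0.
  have hM : inM P (z ^ k * x).
    apply: (res_0M hbS (WO _ hx)) => i; have := h0 i (ltn_ord i).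
    by rewrite (phiE _ (ltn_ord i)); have -> : Ordinal (ltn_ord i) = i by apply: val_inj.
  case: hx => [->|hx]; first by left.
  have [->|x0] := eqVneq x 0; first by left.
  right => w hw; have [->|ne] := (classic (w = P)).
    case: hM => [/eqP|]; first by rewrite mulf_eq0 expfz_eq0 (negPf z0) (negPf x0) andbF.
    by rewrite vzk // /k; lia.
  by have := hx w hw; rewrite ind_ne // addr0.
Qed.

Fixpoint steps_ok (s : seq ((E -> int) * nat)) : Prop :=
  if s is p :: s' then (place p.1 /\ place_degree iota p.1 p.2) /\ steps_ok s' else True.
Definition stepD (s : seq ((E -> int) * nat)) w : int := \sum_(p <- s) ind p.1 w.
Definition stepdeg (s : seq ((E -> int) * nat)) : nat := \sum_(p <- s) p.2.

Lemma chain D s n : steps_ok s -> spans iota (Lg D) n ->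
  spans iota (Lg (fun w => D w + stepD s w)) (stepdeg s + n).
Proof.
elim: s => [|p s IH] /= hs hV.
  rewrite /stepdeg big_nil add0n.
  apply: spans_ext hV => x; apply: Lg_ext => w _; by rewrite /stepD big_nil addr0.
case: hs => [[hp hd] hs].
have := step hp hd (IH hs hV); rewrite /stepdeg big_cons -addnA; apply: spans_ext => x.
apply: Lg_ext => w _; rewrite /stepD big_cons; ring.
Qed.

Lemma steps_ok_cat s1 s2 : steps_ok s1 -> steps_ok s2 -> steps_ok (s1 ++ s2).
Proof. by elim: s1 => //= p s IH [h1 h2] h; split => //; apply: IH. Qed.
Lemma stepD_cat s1 s2 w : stepD (s1 ++ s2) w = stepD s1 w + stepD s2 w.
Proof. by rewrite /stepD big_cat. Qed.
Lemma stepdeg_cat s1 s2 : stepdeg (s1 ++ s2) = (stepdeg s1 + stepdeg s2)%N.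
Proof. by rewrite /stepdeg big_cat. Qed.

Lemma steps_ok_nseq n p : place p.1 -> place_degree iota p.1 p.2 -> steps_ok (nseq n p).
Proof. by move=> h1 h2; elim: n => //= n IH; split. Qed.
Lemma stepD_nseq n p w : stepD (nseq n p) w = n%:Z * ind p.1 w.
Proof. elim: n => [|n IH]; first by rewrite /stepD big_nil mul0r. 
by rewrite /stepD /= big_cons -/(stepD _ _) IH; lia. Qed.
Lemma stepdeg_nseq n p : stepdeg (nseq n p) = (n * p.2)%N.
Proof. elim: n => [|n IH]; first by rewrite /stepdeg big_nil.
by rewrite /stepdeg /= big_cons -/(stepdeg _) IH mulSn. Qed.

Definition rep (I : Type) (p : I -> E -> int) (dg : I -> nat) (c : I -> nat) (r : seq I) :=
  flatten [seq nseq (c i) (p i, dg i) | i <- r].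

Lemma steps_ok_rep I p dg c (r : seq I) :
  (forall i, place (p i) /\ place_degree iota (p i) (dg i)) -> steps_ok (rep p dg c r).
Proof.
move=> h; elim: r => //= i r IH; apply: steps_ok_cat => //.
by case: (h i) => h1 h2; apply: steps_ok_nseq.
Qed.
Lemma stepD_rep I p dg c (r : seq I) w :
  stepD (rep p dg c r) w = \sum_(i <- r) (c i)%:Z * ind (p i) w.
Proof.
elim: r => [|i r IH]; first by rewrite /rep /= /stepD !big_nil.
by rewrite /rep /= stepD_cat -/(rep _ _ _ _) IH big_cons stepD_nseq.
Qed.
Lemma stepdeg_rep I p dg c (r : seq I) :
  stepdeg (rep p dg c r) = \sum_(i <- r) (c i * dg i)%N.
Proof.
elim: r => [|i r IH]; first by rewrite /rep /= /stepdeg !big_nil.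
by rewrite /rep /= stepdeg_cat -/(rep _ _ _ _) IH big_cons stepdeg_nseq.
Qed.

End Div.
Section Rep.
Variables (F : finFieldType) (E : fieldType) (iota : {rmorphism F -> E}).
Local Notation place := (is_place iota).

Definition DF K (Q : 'I_K -> E -> int) (m : 'I_K -> int) w : int :=
  \sum_j m j * ind (Q j) w.

Lemma ind_sym (p w : E -> int) : ind p w = ind w p.
Proof. rewrite /ind; case: decbP => h; case: decbP => h' //; exfalso; auto. Qed.

Lemma DF_at K (Q : 'I_K -> E -> int) m j : injective Q -> DF Q m (Q j) = m j.
Proof.
move=> iQ; rewrite /DF (bigD1 j) //= ind_id mulr1 big1 ?addr0 // => i ij.
rewrite ind_ne ?mulr0 // => e; move: ij; by rewrite (iQ _ _ e) eqxx.
Qed.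
Lemma DF_out K (Q : 'I_K -> E -> int) m w : (forall j, w <> Q j) -> DF Q m w = 0.
Proof. by move=> h; rewrite /DF big1 // => i _; rewrite ind_ne ?mulr0. Qed.

Lemma LRR_Lg K (Q : 'I_K -> E -> int) m x : injective Q ->
  LRR iota Q m x <-> Lg iota (DF Q m) x.
Proof.
move=> iQ; split.
  move=> [->|h]; first by left.
  right => w hw; have [hj hn] := h w hw.
  case: (classic (exists j, w = Q j)) => [[j e]|nj].
    by rewrite e DF_at //; rewrite -e; apply: (hj j).
  rewrite DF_out; first by rewrite oppr0; apply: hn => j e; apply: nj; exists j.
  by move=> j e; apply: nj; exists j.
move=> [->|h]; first by left.
right => w hw; split.
  by move=> j e; have := h w hw; rewrite e DF_at.
by move=> hn; have := h w hw; rewrite DF_out // oppr0.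
Qed.

Variables (k K : nat) (Q : 'I_k -> E -> int) (d0 : 'I_k -> nat) (R : 'I_K -> E -> int).
Variable g : nat.
Hypothesis hQ : divisor_ok iota Q d0.
Hypothesis iR : injective R.
Hypothesis hR : forall i, rational_place iota (R i).
Hypothesis G1 : forall k (P : 'I_k -> E -> int) (m : 'I_k -> int) (d : 'I_k -> nat) (n : nat),
     divisor_ok iota P d -> has_dim iota (LRR iota P m) n ->
     \sum_(i < k) m i * (d i)%:Z + 1 - n%:Z <= g%:Z.

Lemma rep_bound (m : 'I_k -> int) (c : 'I_K -> int) n :
  has_dim iota (Lg iota (fun w => DF Q m w + DF R c w)) n ->
  \sum_j m j * (d0 j)%:Z + \sum_i c i + 1 - n%:Z <= g%:Z.
Proof.
case: hQ => pQ iQ dQ.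
pose Sp := [pred i : 'I_K | decb (forall j, R i <> Q j)].
pose K' := #|Sp|.
pose P' (t : 'I_(k + K')) := match split t with inl j => Q j | inr s => R (enum_val s) end.
pose m' (t : 'I_(k + K')) := match split t with
   inl j => m j + \sum_i c i * ind (R i) (Q j) | inr s => c (enum_val s) end.
pose d' (t : 'I_(k + K')) := match split t with inl j => d0 j | inr s => 1%N end.
have ov : forall i j, R i = Q j -> d0 j = 1%N.
  move=> i j e; have [_ h1] := hR i; apply: (place_degree_uniq (pQ j)); [by rewrite -e | exact: dQ].
have iP' : injective P'.
  move=> t1 t2; rewrite /P'.
  case: (split_ordP t1) => [j1|s1] ->; case: (split_ordP t2) => [j2|s2] -> e.
  - by rewrite (iQ _ _ e).
  - by move: (enum_valP s2) => /decbP h; exfalso; apply: (h j1); rewrite e.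
  - by move: (enum_valP s1) => /decbP h; exfalso; apply: (h j2); rewrite e.
  - by rewrite (enum_val_inj (iR e)).
have okP : divisor_ok iota P' d'.
  split => // t; rewrite /P' /d'; case: (split t) => [j|s].
  - exact: pQ.
  - by case: (hR (enum_val s)) => [[]].
  - exact: dQ.
  - by case: (hR (enum_val s)).
have sL : forall j : 'I_k, split (lshift K' j) = inl j by move=> j; exact: (unsplitK (inl j)).
have sR : forall s : 'I_K', split (rshift k s) = inr s by move=> s; exact: (unsplitK (inr s)).
have eqD : forall w, place w -> DF P' m' w = DF Q m w + DF R c w.
  move=> w hw.
  case: (classic (exists j, w = Q j)) => [[j ->]|nj].
    have e : Q j = P' (lshift K' j) by rewrite /P' sL.
    by rewrite {1}e DF_at // /m' sL DF_at.
  have w0 : DF Q m w = 0 by apply: DF_out => j e; apply: nj; exists j.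
  rewrite w0 add0r.
  case: (classic (exists i, w = R i)) => [[i wi]|ni].
    subst w.
    have Si : i \in Sp by apply/decbP => j e; apply: nj; exists j.
    have e : R i = P' (rshift k (enum_rank_in Si i)).
      by rewrite /P' sR enum_rankK_in.
    by rewrite {1}e DF_at // /m' sR enum_rankK_in // DF_at.
  rewrite [RHS]DF_out; last by move=> j e; apply: ni; exists j.
  apply: DF_out => t; rewrite /P'; case: (split t) => [j|s] e; [apply: nj; exists j|apply: ni; exists (enum_val s)] => //.
move=> hn.
have hd : has_dim iota (LRR iota P' m') n.
  apply: dim_ext hn => x; rewrite LRR_Lg //; apply: Lg_ext => w hw; rewrite eqD //.
have := G1 okP hd.
suff -> : \sum_(i < k + K') m' i * (d' i)%:Z = \sum_j m j * (d0 j)%:Z + \sum_i c i by [].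
rewrite big_split_ord /=.
have L2 : \sum_(s < K') m' (rshift k s) * (d' (rshift k s))%:Z = \sum_(i in Sp) c i.
  rewrite (big_enum_val (A := Sp)); apply: eq_bigr => s _; by rewrite /m' /d' sR mulr1.
have cnt : forall i, \sum_j ind (R i) (Q j) = if i \in Sp then 0 else 1.
  move=> i; have -> : \sum_j ind (R i) (Q j) = DF Q (fun _ => 1) (R i).
    by apply: eq_bigr => j _; rewrite mul1r ind_sym.
  case: ifP => [/decbP h|/decbP h].
    by apply: DF_out => j e; apply: (h j).
  have [j e] : exists j, R i = Q j.
    by apply: NNPP => h'; apply: h => j e; apply: h'; exists j.
  by rewrite e DF_at.
have L1 : \sum_(j < k) m' (lshift K' j) * (d' (lshift K' j))%:Z =
    \sum_j m j * (d0 j)%:Z + \sum_(i | i \notin Sp) c i.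
  rewrite (eq_bigr (fun j => m j * (d0 j)%:Z + \sum_i c i * ind (R i) (Q j))); last first.
    move=> j _; rewrite /m' /d' sL mulrDl; congr (_ + _).
    rewrite mulr_suml; apply: eq_bigr => i _.
    rewrite /ind; case: decbP => e; last by rewrite !mulr0 mul0r.
    rewrite (ov i j (esym e)); exact: mulr1.
  rewrite big_split /=; congr (_ + _).
  rewrite exchange_big /= [RHS]big_mkcond /=; apply: eq_bigr => i _.
  by rewrite -mulr_sumr cnt; case: ifP => _; rewrite ?mulr0 ?mulr1.
rewrite L1 L2 -addrA; congr (_ + _).
by rewrite [RHS](bigID (fun i => i \in Sp)) addrC.
Qed.

End Rep.
Lemma burst_win (F : fieldType) N b (e : 'rV[F]_N) a :
  (forall k : 'I_N, e ord0 k != 0 -> (a <= k < a + b)%N) -> is_burst b e.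
Proof.
move=> h.
case: (classic (exists k, e ord0 k != 0)) => [[k0 hk0]|nk]; last first.
  left; apply/rowP => k; rewrite mxE; apply/eqP; apply: NNPP => hk; apply: nk.
  by exists k; apply/negP. 
right.
case: (@arg_minnP _ k0 (fun k => e ord0 k != 0) (fun k : 'I_N => nat_of_ord k) hk0) => i hi mi.
case: (@arg_maxnP _ k0 (fun k => e ord0 k != 0) (fun k : 'I_N => nat_of_ord k) hk0) => j hj mj.
exists i, j; split => //.
  by move=> k hk; have := mi k hk; have := mj k hk; rewrite /=; lia.
have := h i hi; have := h j hj; lia.
Qed.

Lemma sum_ge (N w0 : nat) : (\sum_(j < N) (w0 <= j)%N)%N = (N - w0)%N.
Proof.
elim: N => [|N IH]; first by rewrite big_ord0.
rewrite big_ord_recr /= IH; case: (leqP w0 N) => h; lia.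
Qed.

Lemma Posz_sum n (f : 'I_n -> nat) : ((\sum_i f i)%N)%:Z = \sum_i (f i)%:Z.
Proof. by rewrite (big_morph Posz PoszD (erefl 0)). Qed.
Lemma aux1 (S x y z : int) : S + x + 1 - y <= S + 1 - z -> z + x <= y.
Proof. lia. Qed.
Section Main.
Variables (F : finFieldType) (E : fieldType) (iota : {rmorphism F -> E}).
Variables (g N lam : nat) (P : 'I_N -> E -> int) (Pinf : E -> int).
Hypothesis hP : forall i, rational_place iota (P i).
Hypothesis hPinf : rational_place iota Pinf.
Hypothesis iP : injective P.
Hypothesis nP : forall i, P i <> Pinf.
Hypothesis hg : (g <= lam)%N.
Hypothesis hl : (lam < N)%N.
Variables (k : nat) (Q : 'I_k -> E -> int) (m0 : 'I_k -> int) (d0 : 'I_k -> nat) (n0 : nat).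
Hypothesis okQ : divisor_ok iota Q d0.
Hypothesis hA0 : has_dim iota (LRR iota Q m0) n0.
Hypothesis eg : \sum_(i < k) m0 i * (d0 i)%:Z + 1 - n0%:Z = g%:Z.
Hypothesis G1 : forall k (P : 'I_k -> E -> int) (m : 'I_k -> int) (d : 'I_k -> nat) (n : nat),
     divisor_ok iota P d -> has_dim iota (LRR iota P m) n ->
     \sum_(i < k) m i * (d i)%:Z + 1 - n%:Z <= g%:Z.

Local Notation place := (is_place iota).
Local Notation Lg := (Lg iota).

Definition RR (i : 'I_N.+1) := if unlift ord0 i is Some j then P j else Pinf.

Lemma RR_inj : injective RR.
Proof.
move=> i1 i2; rewrite /RR.
case: unliftP => [j1 ->|->]; case: unliftP => [j2 ->|->] // e.
- by rewrite (iP e).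
- by exfalso; apply: (nP e).
- by exfalso; apply: (nP (esym e)).
Qed.
Lemma RR_rat i : rational_place iota (RR i).
Proof. by rewrite /RR; case: unlift. Qed.

Lemma DFR_E c w : DF RR c w = c ord0 * ind Pinf w + \sum_j c (lift ord0 j) * ind (P j) w.
Proof. by rewrite /DF big_ord_recl /RR unlift_none; congr (_ + _); apply: eq_bigr => j _; rewrite liftK. Qed.

Lemma okQ' : injective Q. Proof. by case: okQ. Qed.

Lemma A0sp : spans iota (Lg (DF Q m0)) n0.
Proof. apply: dim_spans; apply: dim_ext hA0 => x; exact: LRR_Lg okQ'. Qed.

Lemma bound D (m : 'I_k -> int) (c : 'I_N.+1 -> int) n :
  (forall w, place w -> D w = DF Q m w + DF RR c w) ->
  has_dim iota (Lg D) n ->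
  \sum_j m j * (d0 j)%:Z + \sum_i c i + 1 - n%:Z <= g%:Z.
Proof.
move=> eD hd; apply: (rep_bound okQ RR_inj RR_rat G1).
by apply: dim_ext hd => x; apply: Lg_ext.
Qed.

Definition ZZ w := DF P (fun _ => 1) w.

Lemma noZ f : Lg (fun w => lam%:Z * ind Pinf w - ZZ w) f -> f = 0.
Proof.
move=> hf; apply: NNPP => f0.
pose s := rep P (fun _ => 1%N) (fun _ => 1%N) (index_enum 'I_N).
have oks : steps_ok iota s.
  by apply: steps_ok_rep => i; case: (hP i) => [[h1 h2]]; split.
have sE : forall w, stepD s w = ZZ w.
  move=> w; rewrite stepD_rep; apply: eq_bigr => i _ //.
have sd : stepdeg s = N.
  by rewrite stepdeg_rep /= sum1_card card_ord.
have [n1 hn1 hd1] := extract (Lg_sub iota _) (chain oks A0sp).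
rewrite sd in hn1.
pose c1 := fun i : 'I_N.+1 => if unlift ord0 i is Some _ then 1 else 0 : int.
have eD1 : forall w, place w -> DF Q m0 w + stepD s w = DF Q m0 w + DF RR c1 w.
  move=> w _; rewrite sE DFR_E /c1 unlift_none mul0r add0r; congr (_ + _).
  by apply: eq_bigr => j _; rewrite liftK.
have b1 : (n0 + N <= n1)%N.
  have e1 : \sum_i c1 i = N%:Z.
    rewrite big_ord_recl /c1 unlift_none add0r.
    rewrite (eq_bigr (fun _ => (1%N)%:Z)); last by move=> j _; rewrite liftK.
    by rewrite -Posz_sum sum1_card card_ord.
  have := bound eD1 hd1; rewrite e1 -eg => /aux1; lia.
have hi : indep iota (Lg (fun w => DF Q m0 w + stepD (nseq lam (Pinf, 1%N)) w)) n1.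
  case: hd1 => [b [hb1 hb2 _]]; exists (fun i => f * b i); split.
    move=> i; apply/(Lg_ext _ _ (D := fun w => (lam%:Z * ind Pinf w - ZZ w) + (DF Q m0 w + stepD s w))).
      by move=> w _; rewrite sE stepD_nseq /=; ring.
    exact: Lg_mul.
  move=> a ha; apply: hb2.
  have : f * comb iota b a = 0.
    by rewrite -ha /comb mulr_sumr; apply: eq_bigr => i _; rewrite mulrCA.
  by move/eqP; rewrite mulf_eq0 => /orP [/eqP|/eqP] //.
have [hpl hdeg] := hPinf.
have := key_ineq hi (chain (@steps_ok_nseq _ _ iota lam (Pinf, 1%N) hpl hdeg) A0sp).
rewrite stepdeg_nseq muln1.
move: b1 hl; lia.
Qed.


Definition w0 := (N - lam + g)%N.
Definition cDz (j : 'I_N) : int := (w0 <= j)%N%:Z.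
Definition CC w := lam%:Z * ind Pinf w - DF P cDz w.
Definition mposn j := if 0 <= m0 j then `|m0 j|%N else 0%N.
Definition mnegn j := if 0 <= m0 j then 0%N else `|m0 j|%N.
Definition mposz j : int := (mposn j)%:Z.

Lemma existsC : exists f, f != 0 /\ Lg CC f.
Proof.
apply: NNPP => nf.
have hC0 : forall f, Lg CC f -> f = 0.
  by move=> f hf; apply: NNPP => f0; apply: nf; exists f; split => //; apply/eqP.
have sp0 : spans iota (Lg CC) 0.
  exists (fun _ => 0); split; first by case.
  by move=> x /hC0 ->; exists (fun _ => 0); rewrite /comb big_ord0.
have [hpl hdeg] := hPinf.
pose sC1 := rep P (fun _ => 1%N) (fun j => nat_of_bool (w0 <= j)%N) (index_enum 'I_N).
pose sC2 := rep Q d0 mposn (index_enum 'I_k).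
pose sA1 := nseq lam (Pinf, 1%N).
pose sA2 := rep Q d0 mnegn (index_enum 'I_k).
have okC1 : steps_ok iota sC1.
  by apply: steps_ok_rep => i; case: (hP i) => [[h1 h2]]; split.
have okQs : forall j, place (Q j) /\ place_degree iota (Q j) (d0 j).
  by case: okQ => h1 _ h3 j; split.
have okC2 : steps_ok iota sC2 by apply: steps_ok_rep.
have okA2 : steps_ok iota sA2 by apply: steps_ok_rep.
have okA1 : steps_ok iota sA1 by apply: steps_ok_nseq.
have spC := chain okC2 (chain okC1 sp0).
have spA := chain okA2 (chain okA1 A0sp).
have [nb hnb hdb] := extract (Lg_sub iota _) spA.
have eqCA : forall w, place w ->
   CC w + stepD sC1 w + stepD sC2 w = DF Q m0 w + stepD sA1 w + stepD sA2 w.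
  move=> w _; rewrite /CC !stepD_rep stepD_nseq /= /DF.
  have e1 : \sum_(i <- index_enum 'I_N) (nat_of_bool (w0 <= i)%N)%:Z * ind (P i) w =
            \sum_j cDz j * ind (P j) w by [].
  rewrite e1.
  have e2 : \sum_(i <- index_enum 'I_k) (mposn i)%:Z * ind (Q i) w =
     \sum_j m0 j * ind (Q j) w + \sum_(i <- index_enum 'I_k) (mnegn i)%:Z * ind (Q i) w.
    rewrite -big_split /=; apply: eq_bigr => j _; rewrite -mulrDl; congr (_ * _).
    rewrite /mposn /mnegn; case: ifP => h; lia.
  rewrite e2; ring.
have ib : indep iota (Lg (fun w => (CC w + stepD sC1 w) + stepD sC2 w)) nb.
  apply: dim_indep; apply: dim_ext hdb => x; apply: Lg_ext => w hw; by rewrite eqCA.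
have le1 := key_ineq ib spC.
pose cb := fun i : 'I_N.+1 => if unlift ord0 i is Some _ then 0 else lam%:Z.
have eDb : forall w, place w ->
    DF Q m0 w + stepD sA1 w + stepD sA2 w = DF Q mposz w + DF RR cb w.
  move=> w _; rewrite DFR_E.
  have z0 : \sum_j cb (lift ord0 j) * ind (P j) w = 0.
    by rewrite big1 // => j _; rewrite /cb liftK mul0r.
  rewrite z0 addr0 /cb unlift_none stepD_nseq stepD_rep /= /DF.
  have e2 : \sum_(i <- index_enum 'I_k) (mposn i)%:Z * ind (Q i) w =
     \sum_j m0 j * ind (Q j) w + \sum_(i <- index_enum 'I_k) (mnegn i)%:Z * ind (Q i) w.
    rewrite -big_split /=; apply: eq_bigr => j _; rewrite -mulrDl; congr (_ * _).
    rewrite /mposn /mnegn; case: ifP => h; lia.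
  rewrite /mposz e2; ring.
have bb := bound eDb hdb.
have ecb : \sum_i cb i = lam%:Z.
  rewrite big_ord_recl /cb unlift_none big1 ?addr0 // => j _; by rewrite liftK.
have sd1 : stepdeg sC1 = (N - w0)%N.
  rewrite stepdeg_rep /= -(sum_ge N w0); apply: eq_bigr => j _; by rewrite muln1.
have sd2 : \sum_j mposz j * (d0 j)%:Z = (stepdeg sC2)%:Z.
  rewrite stepdeg_rep Posz_sum; apply: eq_bigr => j _; by rewrite PoszM.
move: bb le1; rewrite ecb sd2 sd1 /w0; move: hg hl; lia.
Qed.


Lemma final : let t := (1 + (N - lam + g - 1) %/ 2)%N in
  exists (r c1 c2 : 'rV[F]_N),
    [/\ AG_code iota P Pinf lam c1, AG_code iota P Pinf lam c2, c1 <> c2,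
        is_burst t (r - c1) & is_burst t (r - c2)].
Proof.
move=> t.
have [f [f0 hf]] := existsC.
have hfv : forall w, place w -> - CC w <= w f.
  by case: hf => [e|h //]; move: f0; rewrite e eqxx.
have [hpl hdeg] := hPinf.
have CPinf : CC Pinf = lam%:Z.
  rewrite /CC ind_id DF_out ?mulr1 ?subr0 // => j e; exact: (nP (esym e)).
have CPj : forall j, CC (P j) = - cDz j.
  by move=> j; rewrite /CC ind_ne ?mulr0 ?add0r ?DF_at //; exact: nP.
have Cw : forall w, place w -> w <> Pinf -> CC w <= 0.
  move=> w hw nw; case: (classic (exists j, w = P j)) => [[j ->]|nj].
    by rewrite CPj /cDz; lia.
  rewrite /CC ind_ne // DF_out; [by rewrite mulr0 subr0 | by move=> j e; apply: nj; exists j].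
have hO : forall j, inO (P j) f.
  move=> j; right; have := hfv (P j) (proj1 (hP j)); rewrite CPj /cDz; lia.
have hLm : L_multiple iota Pinf lam f.
  right; split; first by have := hfv Pinf hpl; rewrite CPinf.
  move=> w hw nw; have := hfv w hw; have := Cw w hw nw; lia.
have hev : forall j, exists a, evals_to iota (P j) f a.
  by move=> j; apply: (eval_exists (proj1 (hP j)) (hP j) (hO j)).
pose ev j := proj1_sig (constructive_indefinite_description _ (hev j)).
have hevs : forall j, evals_to iota (P j) f (ev j).
  by move=> j; rewrite /ev; case: constructive_indefinite_description.
pose c2 : 'rV[F]_N := \row_j ev j.
have c2w : forall j : 'I_N, c2 0 j != 0 -> (j < w0)%N.
  move=> j; rewrite mxE; case: (ltnP j w0) => // hj nz; exfalso; move: nz.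
  have hM : inM (P j) f.
    right; have := hfv (P j) (proj1 (hP j)); rewrite CPj /cDz hj; lia.
  by rewrite (evals_M (proj1 (hP j)) (hevs j) hM) eqxx.
have c2n0 : c2 <> 0.
  move=> e; suff : f = 0 by move=> e'; move: f0; rewrite e' eqxx.
  apply: noZ; right => w hw.
  have hM : forall j, inM (P j) f.
    move=> j; have := hevs j; have : ev j = 0 by have := congr1 (fun M : 'rV[F]_N => M 0 j) e; rewrite !mxE.
    by move=> -> [_]; rewrite rmorph0 subr0.
  case: (classic (w = Pinf)) => [->|nw].
    rewrite ind_id /ZZ DF_out; last by move=> j e'; exact: (nP (esym e')).
    by have := hfv Pinf hpl; rewrite CPinf; lia.
  rewrite ind_ne // mulr0 add0r opprK.
  case: (classic (exists j, w = P j)) => [[j ->]|nj].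
    rewrite /ZZ DF_at //; case: (hM j) => [e'|]; [by move: f0; rewrite e' eqxx|lia].
  rewrite /ZZ DF_out; last by move=> j e'; apply: nj; exists j.
  have := hfv w hw; have := Cw w hw nw; lia.
exists (\row_j (if (j < t)%N then c2 0 j else 0)), 0, c2; split.
- exists 0; split; first by left.
  by move=> i; rewrite mxE; split; [left|rewrite rmorph0 subr0; left].
- exists f; split => // i; rewrite mxE; exact: hevs.
- by move=> e; apply: c2n0; rewrite -e.
- apply: (burst_win (a := 0)) => j; rewrite !mxE subr0 add0n.
  by case: ifP => // h; rewrite eqxx.
- apply: (burst_win (a := t)) => j; rewrite !mxE.
  case: ifP => h; first by rewrite subrr eqxx.
  rewrite sub0r oppr_eq0 => nz; have : (j < w0)%N by apply: c2w; rewrite mxE.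
  move: h hl hg; rewrite /w0 /t; lia.
Qed.

End Main.
Unset Implicit Arguments.

Theorem mainTheorem7 (F : finFieldType) (E : fieldType) (iota : {rmorphism F -> E})
  (g N lam : nat) (P : 'I_N -> E -> int) (Pinf : E -> int) :
  function_field iota -> full_constant_field iota -> is_genus iota g ->
  (forall i, rational_place iota (P i)) -> rational_place iota Pinf ->
  injective P -> (forall i, P i <> Pinf) ->
  (g <= lam)%N -> (lam < N)%N ->
  let t := (1 + (N - lam + g - 1) %/ 2)%N in
  exists (r c1 c2 : 'rV[F]_N),
    [/\ AG_code iota P Pinf lam c1, AG_code iota P Pinf lam c2, c1 <> c2,
        is_burst t (r - c1) & is_burst t (r - c2)].
Proof.
move=> _ _ [G1 [k [Q [m0 [d0 [n0 [okQ hA0 eg]]]]]]] hP hPinf iP nP hg hl.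
exact: (final hP hPinf iP nP hg hl okQ hA0 eg G1).
Qed.
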